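(* For every infinite $\lambda$-term $M$: $\lambda.M$ is derivable in $\mathbf{Reg}^{+}$ if and only if $\lambda.M$ is derivable in $\mathbf{Reg}^{+}_0$.
   Context: Infinite $\lambda$-terms are possibly infinite terms built from variables, abstractions and applications, modulo $\alpha$-equivalence. A prefixed term is $\lambda x_1\ldots x_n.M$ ($n\ge0$, distinct variables, separate abstraction prefix; $\lambda.M$ for empty prefix) with the free variables of $M$ among the $x_i$. Proof system $\mathbf{Reg}^{+}$ (finite natural-deduction trees of prefixed terms): axiom (nlvar) $\lambda\vec{x}y.y$; $(\lambda)$: from $\lambda\vec{x}y.M_0$ infer $\lambda\vec{x}.\lambda y.M_0$; $(@)$: from $\lambda\vec{x}.M_0$ and $\lambda\vec{x}.M_1$ infer $\lambda\vec{x}.(M_0\,M_1)$; $(\mathrm{del}^{+})$: from $\lambda x_1\ldots x_{n-1}.M$ infer $\lambda x_1\ldots x_n.M$ if $x_n$ is not free in $M$; (FIX,$u$): if $\mathcal{D}_0$ is a derivation of depth $\ge1$ of $\lambda\vec{x}.M$ possibly with open assumption leaves $[\lambda\vec{x}.M]^u$, infer $\lambda\vec{x}.M$, discharging them. $\mathbf{Reg}^{+}_0$: same axioms and rules, but each instance of (FIX,$u$) must additionally satisfy: every $\lambda\vec{y}.N$ on a thread in $\mathcal{D}_0$ from an open marked assumption $(\lambda\vec{x}.M)^u$ downwards has $|\vec{y}|\ge|\vec{x}|$. A prefixed term is derivable in a system if there is a finite derivation of it in which every marked assumption is discharged by some instance of (FIX). *)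

(* Defs.v *)
From mathcomp Require Import all_boot.
Set Implicit Arguments. Unset Strict Implicit. Unset Printing Implicit Defensive.

(** * Infinite lambda-terms, modulo alpha: coinductive de Bruijn terms.
    Equality of infinite terms is bisimilarity [bisim]. *)
CoInductive term : Type :=
| Var : nat -> term
| Lam : term -> term
| App : term -> term -> term.

CoInductive bisim : term -> term -> Prop :=
| bisim_Var k : bisim (Var k) (Var k)
| bisim_Lam t t' : bisim t t' -> bisim (Lam t) (Lam t')
| bisim_App t u t' u' : bisim t t' -> bisim u u' -> bisim (App t u) (App t' u').

CoInductive wsc : nat -> term -> Prop :=
| wsc_Var n k : k < n -> wsc n (Var k)
| wsc_Lam n t : wsc n.+1 t -> wsc n (Lam t)
| wsc_App n t u : wsc n t -> wsc n u -> wsc n (App t u).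

CoFixpoint shift (c : nat) (t : term) : term :=
  match t with
  | Var k => Var (if k < c then k else k.+1)
  | Lam t' => Lam (shift c.+1 t')
  | App t1 t2 => App (shift c t1) (shift c t2)
  end.

(** A prefixed term  \x1...xn.M  is the pair (n, M), with M a de Bruijn term
    whose free indices are < n (x_n is index 0, x_1 is index n-1). *)
Definition judg := (nat * term)%type.
Definition jeq (j j' : judg) : Prop := j.1 = j'.1 /\ bisim j.2 j'.2.

Inductive deriv : Type :=
| DAssum (u : nat) (j : judg)
| DNlvar (n : nat)
| DLam (d : deriv)
| DApp (d0 d1 : deriv)
| DDel (d : deriv)
| DFix (u : nat) (j : judg) (d : deriv).

Fixpoint concl (d : deriv) : judg :=
  match d with
  | DAssum _ j => j
  | DNlvar n => (n.+1, Var 0)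
  | DLam d' => ((concl d').1.-1, Lam (concl d').2)
  | DApp d0 d1 => ((concl d0).1, App (concl d0).2 (concl d1).2)
  | DDel d' => ((concl d').1.+1, shift 0 (concl d').2)
  | DFix _ j _ => j
  end.

Fixpoint depth (d : deriv) : nat :=
  match d with
  | DAssum _ _ | DNlvar _ => 0
  | DLam d' | DDel d' | DFix _ _ d' => (depth d').+1
  | DApp d0 d1 => (maxn (depth d0) (depth d1)).+1
  end.

Fixpoint open_leaf (u : nat) (j : judg) (d : deriv) : Prop :=
  match d with
  | DAssum v j' => v = u /\ j = j'
  | DNlvar _ => False
  | DLam d' | DDel d' => open_leaf u j d'
  | DApp d0 d1 => open_leaf u j d0 \/ open_leaf u j d1
  | DFix v _ d' => v <> u /\ open_leaf u j d'
  end.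

(** Reg+_0 side condition: every node on a thread from an open u-assumption
    of [d] down to the root of [d] has prefix length >= n.  A node is on such
    a thread iff some u-leaf is open in the subderivation rooted at it (and
    no (FIX,u) between it and the root of [d] discharges that leaf). *)
Fixpoint thread_ok (u n : nat) (d : deriv) : Prop :=
  ((exists j, open_leaf u j d) -> n <= (concl d).1) /\
  match d with
  | DAssum _ _ | DNlvar _ => True
  | DLam d' | DDel d' => thread_ok u n d'
  | DApp d0 d1 => thread_ok u n d0 /\ thread_ok u n d1
  | DFix v _ d' => v <> u -> thread_ok u n d'
  end.

(** Local correctness of every rule instance; [sys0 = true] is Reg+_0,
    [sys0 = false] is Reg+.  Every node must be a prefixed term. *)
Fixpoint valid (sys0 : bool) (d : deriv) : Prop :=
  wsc (concl d).1 (concl d).2 /\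
  match d with
  | DAssum _ _ => True
  | DNlvar _ => True
  | DLam d' => valid sys0 d' /\ 0 < (concl d').1
  | DApp d0 d1 => valid sys0 d0 /\ valid sys0 d1 /\ (concl d0).1 = (concl d1).1
  | DDel d' => valid sys0 d'
  | DFix u j d' =>
      valid sys0 d' /\ 1 <= depth d' /\ jeq (concl d') j /\
      (forall j', open_leaf u j' d' -> jeq j' j) /\
      (sys0 -> thread_ok u j.1 d')
  end.

Definition derivable (sys0 : bool) (j : judg) : Prop :=
  exists d, valid sys0 d /\ (forall u j', ~ open_leaf u j' d) /\ jeq (concl d) j.

Definition derivable_Reg_plus (j : judg) := derivable false j.
Definition derivable_Reg_plus0 (j : judg) := derivable true j.

(* Main.v *)
Require Import Defs.
From mathcomp Require Import all_boot.
Set Implicit Arguments. Unset Strict Implicit. Unset Printing Implicit Defensive.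

Definition frob (t : term) : term :=
  match t with Var k => Var k | Lam t => Lam t | App a b => App a b end.
Lemma frob_eq t : t = frob t. Proof. by case: t. Qed.

Lemma bisim_refl t : bisim t t.
Proof. revert t; cofix CIH; intros [k|t|t u]; constructor; apply CIH. Qed.

Lemma bisim_sym t u : bisim t u -> bisim u t.
Proof. revert t u; cofix CIH; intros t u H; destruct H; constructor; apply CIH; assumption. Qed.

Lemma bisim_trans t u v : bisim t u -> bisim u v -> bisim t v.
Proof.
revert t u v; cofix CIH; intros t u v H1 H2; destruct H1; inversion H2; subst.
- constructor.
- constructor; eapply CIH; eassumption.
- constructor; eapply CIH; eassumption.
Qed.

Lemma wsc_bisim n t t' : bisim t t' -> wsc n t -> wsc n t'.
Proof.
revert n t t'; cofix CIH; intros n t t' H1 H2; destruct H1; inversion H2; subst.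
- constructor; assumption.
- constructor; eapply CIH; eassumption.
- constructor; eapply CIH; eassumption.
Qed.

Lemma shift_bisim c t t' : bisim t t' -> bisim (shift c t) (shift c t').
Proof.
revert c t t'; cofix CIH; intros c t t' H.
rewrite (frob_eq (shift c t)) (frob_eq (shift c t')).
destruct H; simpl; constructor; try apply CIH; assumption.
Qed.

Lemma jeq_refl j : jeq j j. Proof. split; [done|apply bisim_refl]. Qed.
Lemma jeq_sym j j' : jeq j j' -> jeq j' j.
Proof. case=> h1 h2; split; [by rewrite h1|by apply bisim_sym]. Qed.
Lemma jeq_trans j j' j'' : jeq j j' -> jeq j' j'' -> jeq j j''.
Proof. case=> h1 h2 [h3 h4]; split; [by rewrite h1|by apply: bisim_trans h2 h4]. Qed.

Lemma valid_weaken d : valid true d -> valid false d.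
Proof.
elim: d => /= [u j|n|d IH|d0 IH0 d1 IH1|d IH|u j d IH]; intuition.
Qed.

Inductive entry := ENL (n : nat) | EL (j : judg) (c : nat)
  | EA (j : judg) (c0 c1 : nat) | ED (j : judg) (c : nat).
Definition dflt := ENL 0.
Definition jof (e : entry) : judg :=
  match e with ENL n => (n.+1, Var 0) | EL j _ => j | EA j _ _ => j | ED j _ => j end.
Definition JG (G : seq entry) (c : nat) : judg := jof (nth dflt G c).

Definition wfe (G : seq entry) (e : entry) : Prop :=
  match e with
  | ENL n => True
  | EL j c => wsc j.1 j.2 /\ 0 < (JG G c).1 /\ j.1 = (JG G c).1.-1 /\ bisim (Lam (JG G c).2) j.2
  | EA j c0 c1 => wsc j.1 j.2 /\ (JG G c0).1 = j.1 /\ (JG G c1).1 = j.1 /\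
                  bisim (App (JG G c0).2 (JG G c1).2) j.2
  | ED j c => wsc j.1 j.2 /\ j.1 = (JG G c).1.+1 /\ bisim (shift 0 (JG G c).2) j.2
  end.

Fixpoint gen (d : deriv) (env : nat -> nat) (nx : nat) : seq entry * nat :=
  match d with
  | DAssum u _ => ([::], env u)
  | DNlvar n => ([:: ENL n], nx)
  | DLam b => let r := gen b env nx.+1 in (EL (concl d) r.2 :: r.1, nx)
  | DApp b0 b1 => let r0 := gen b0 env nx.+1 in
                  let r1 := gen b1 env (nx.+1 + size r0.1) in
                  (EA (concl d) r0.2 r1.2 :: r0.1 ++ r1.1, nx)
  | DDel b => let r := gen b env nx.+1 in (ED (concl d) r.2 :: r.1, nx)
  | DFix u _ b => gen b (fun x => if x == u then nx else env x) nx
  end.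

Definition notA d := match d with DAssum _ _ => False | _ => True end.

Lemma gen_head d env nx : valid false d -> notA d ->
  exists e l, gen d env nx = (e :: l, nx) /\ jeq (jof e) (concl d).
Proof.
elim: d env nx => /= [u j|n|d IH|d0 IH0 d1 IH1|d IH|u j d IH] env nx hv hn //;
  try by (do 2 eexists; split; [reflexivity|apply jeq_refl]).
case: hv => _ [hv [hdep [hj _]]].
have hnA : notA d by case: d IH hv hdep hj.
have [e [l [-> he]]] := IH (fun x => if x == u then nx else env x) nx hv hnA.
exists e, l; split=> //; exact: jeq_trans he hj.
Qed.

Definition Placed (G : seq entry) nx (l : seq entry) :=
  forall i, i < size l -> nth dflt G (nx + i) = nth dflt l i.

Lemma Placed_cons G nx e l : Placed G nx (e :: l) ->
  nth dflt G nx = e /\ Placed G nx.+1 l.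
Proof.
move=> h; split; first by have := h 0 erefl; rewrite addn0.
by move=> i hi; have := h i.+1 hi; rewrite addnS addSn.
Qed.

Lemma Placed_cat G nx l1 l2 : Placed G nx (l1 ++ l2) ->
  Placed G nx l1 /\ Placed G (nx + size l1) l2.
Proof.
move=> h; split.
- move=> i hi; rewrite h ?size_cat; last by apply: leq_trans hi (leq_addr _ _).
  by rewrite nth_cat hi.
- move=> i hi; rewrite -addnA h ?size_cat ?ltn_add2l //.
  by rewrite nth_cat ltnNge leq_addr /= addKn.
Qed.

Lemma gen_correct d env nx G : valid false d -> Placed G nx (gen d env nx).1 ->
  (forall u j, open_leaf u j d -> jeq (JG G (env u)) j) ->
  jeq (JG G (gen d env nx).2) (concl d) /\
  (forall i, i < size (gen d env nx).1 -> wfe G (nth dflt (gen d env nx).1 i)).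
Proof.
elim: d env nx => [u j|n|d IH|d0 IH0 d1 IH1|d IH|u j d IH] env nx hv hP hO.
- split=> //=; exact: hO.
- move: hP => /= /Placed_cons [hG _]; split; first by rewrite /JG hG; apply: jeq_refl.
  by case.
- move: hP => /= /Placed_cons [hG hP].
  case: hv => hw [hv hpos].
  have [IH1 IH2] := IH env nx.+1 hv hP hO.
  split; first by rewrite /JG hG; apply: jeq_refl.
  case=> [|i] /=; last exact: IH2.
  move=> _; case: IH1 => e1 e2.
  rewrite e1; repeat split => //.
  exact: bisim_Lam e2.
- move: hP => /= /Placed_cons [hG /Placed_cat [hP0 hP1]].
  case: hv => hw [hv0 [hv1 heq]].
  have [IH01 IH02] := IH0 env nx.+1 hv0 hP0 (fun u j h => hO u j (or_introl h)).
  have [IH11 IH12] := IH1 env _ hv1 hP1 (fun u j h => hO u j (or_intror h)).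
  split; first by rewrite /JG hG; apply: jeq_refl.
  case=> [|i] /=.
  + move=> _; case: IH01 => e1 e2; case: IH11 => e3 e4.
    split=> //; split; first by rewrite e1.
    split; first by rewrite e3 heq.
    exact: bisim_App e2 e4.
  + rewrite size_cat nth_cat => hi; case: ifP => hi0; first exact: IH02.
    apply: IH12; rewrite -(ltn_add2l (size (gen d0 env nx.+1).1)) subnKC //.
    by rewrite leqNgt hi0.
- move: hP => /= /Placed_cons [hG hP].
  case: hv => hw hv.
  have [IH1 IH2] := IH env nx.+1 hv hP hO.
  split; first by rewrite /JG hG; apply: jeq_refl.
  case=> [|i] /=; last exact: IH2.
  move=> _; case: IH1 => e1 e2.
  rewrite e1; repeat split => //.
  exact: shift_bisim e2.
- case: hv => hw [hv [hdep [hj [hl _]]]].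
  have hnA : notA d by move: hdep; destruct d.
  set env' := (fun x => if x == u then nx else env x).
  have [e [l [hgen he]]] := gen_head env' nx hv hnA.
  move: hP; rewrite /= -/env' hgen => hP.
  have [hG _] := Placed_cons hP.
  have hO' : forall u' j', open_leaf u' j' d -> jeq (JG G (env' u')) j'.
    move=> u' j' hl'; rewrite /env'; case: eqP => [e0|hne].
    * rewrite e0 in hl'; rewrite /JG hG; exact: (jeq_trans he (jeq_trans hj (jeq_sym (hl _ hl')))).
    * by apply: hO => /=; split=> //; move=> h; apply: hne.
  have hP' : Placed G nx (gen d env' nx).1 by rewrite hgen.
  have [IH1 IH2] := IH env' nx hv hP' hO'.
  move: IH1 IH2; rewrite hgen /= => IH1 IH2; split=> //.
  exact: jeq_trans IH1 hj.
Qed.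

Definition goodrep (G : seq entry) (p : seq nat) (v : nat) : bool :=
  (index v p < size p) && all (fun w => (JG G v).1 <= (JG G w).1) (take (index v p) p).

Fixpoint build (G : seq entry) (f : nat) (p : seq nat) (v : nat) {struct f} : deriv :=
  match nth dflt G v with
  | ENL n => DNlvar n
  | e => if goodrep G p v then DAssum v (JG G v) else
    match f with
    | 0 => DFix v (JG G v) (DNlvar 0)
    | f'.+1 => DFix v (JG G v) (match e with
         | EL _ c => DLam (build G f' (v :: p) c)
         | EA _ c0 c1 => DApp (build G f' (v :: p) c0) (build G f' (v :: p) c1)
         | ED _ c => DDel (build G f' (v :: p) c)
         | ENL n => DNlvar n end)
    end
  end.

Lemma concl_build G f p v : concl (build G f p v) = JG G v.
Proof.
case: f => [|f] /=; case E: (nth dflt G v) => [n|j c|j c0 c1|j c] /=;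
  try (case: ifP => _ /=); by rewrite /JG E.
Qed.

Lemma char_step (P : nat -> bool) u v p c : v <> u -> u \in v :: p ->
  all P (c :: take (index u (v :: p)) (v :: p)) ->
  u \in p /\ all P (v :: take (index u p) p).
Proof.
move=> hne; have hvu : (v == u) = false by apply/eqP.
have huv : (u == v) = false by apply/eqP=> h; apply: hne.
rewrite in_cons huv orFb => hin.
have -> : index u (v :: p) = (index u p).+1 by rewrite /= hvu.
by move=> /and3P [_ h1 h2]; split=> //; apply/andP.
Qed.

Lemma open_char G f p v u j : open_leaf u j (build G f p v) ->
  j = JG G u /\ u \in p /\
  all (fun w => (JG G u).1 <= (JG G w).1) (v :: take (index u p) p).
Proof.
elim: f p v => [|f IH] p v /=; case E: (nth dflt G v) => [n|j0 c|j0 c0 c1|j0 c] //=;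
  case: ifP => hg //=; try (by case);
  try (move=> [<- ->]; move/andP: hg => [h1 h2]; split=> //;
       split; [by rewrite -index_mem | by rewrite /= leqnn h2]).
- move=> [hne hl]; have [-> [hin hall]] := IH _ _ hl.
  by have [? ?] := char_step hne hin hall.
- move=> [hne hl]; case: hl => hl; have [-> [hin hall]] := IH _ _ hl;
  by have [? ?] := char_step hne hin hall.
- move=> [hne hl]; have [-> [hin hall]] := IH _ _ hl.
  by have [? ?] := char_step hne hin hall.
Qed.

Lemma step2 (h : nat -> nat) u v p c :
  all (fun w => h u <= h w) (c :: take (index u (v :: p)) (v :: p)) -> h u <= h c /\ h u <= h v.
Proof.
case: (eqVneq v u) => [->|hne] /=; first by rewrite eqxx leqnn => /andP [? _].
by rewrite (negbTE hne) /= => /and3P [? ? _].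
Qed.

Lemma thread_head G f p v u :
  (exists j, open_leaf u j (build G f p v)) -> (JG G u).1 <= (concl (build G f p v)).1.
Proof. by move=> [j hl]; have [_ [_ /andP [h _]]] := open_char hl; rewrite concl_build. Qed.

Lemma thread_build G (wf : forall w, wfe G (nth dflt G w)) f p v u :
  thread_ok u (JG G u).1 (build G f p v) /\
  (forall w j b, build G f p v = DFix w j b -> thread_ok u (JG G u).1 b).
Proof.
elim: f p v => [|f IH] p v.
- have := @thread_head G 0 p v u; rewrite /=.
  case: (nth dflt G v) => [n|j0 c|j0 c0 c1|j0 c] /=.
  + by move=> hh; split=> // ? ? ?.
  + case: (goodrep G p v) => /= hh; [by split=> // ? ? ? | split; [split; [exact: hh | by move=> _; split=> //; case] | ]];
    by move=> ? ? ? [_ _ <-]; split=> //; case.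
  + case: (goodrep G p v) => /= hh; [by split=> // ? ? ? | split; [split; [exact: hh | by move=> _; split=> //; case] | ]];
    by move=> ? ? ? [_ _ <-]; split=> //; case.
  + case: (goodrep G p v) => /= hh; [by split=> // ? ? ? | split; [split; [exact: hh | by move=> _; split=> //; case] | ]];
    by move=> ? ? ? [_ _ <-]; split=> //; case.
- have hh := @thread_head G f.+1 p v u.
  have key : forall w j b, build G f.+1 p v = DFix w j b -> thread_ok u (JG G u).1 b.
    move=> w j b; rewrite /=; have := wf v; rewrite /JG.
    case E: (nth dflt G v) => [n|j0 c|j0 c0 c1|j0 c] //=; case: ifP => // hg;
      move=> hw [_ _ <-] /=.
    + split; last exact: (IH _ _).1.
      move=> [j' hl]; have [_ [_ hall]] := open_char hl; have [hc hv] := @step2 (fun w => (JG G w).1) _ _ _ _ hall.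
      rewrite concl_build; move: hv; rewrite /JG E /=; case: hw => _ [_ [<- _]] //.
    + split; last by split; [exact: (IH _ _).1 | exact: (IH _ _).1].
      move=> [j' hl]; rewrite concl_build.
      case: hl => hl; have [_ [_ hall]] := open_char hl; have [hc hv] := @step2 (fun w => (JG G w).1) _ _ _ _ hall;
        move: hv; rewrite /JG E /=; case: hw => _ [-> _] //.
    + split; last exact: (IH _ _).1.
      move=> [j' hl]; have [_ [_ hall]] := open_char hl; have [hc hv] := @step2 (fun w => (JG G w).1) _ _ _ _ hall.
      rewrite concl_build; move: hv; rewrite /JG E /=; case: hw => _ [<- _] //.
  split=> //.
  move: hh key; case hb: (build G f.+1 p v) => [u0 j0|n|x|x0 x1|x|w j b] hh key;
    try (by move: hb; rewrite /=; case: (nth dflt G v) => [?|? ?|? ? ?|? ?];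
         try (case: ifP => _); move=> ?; discriminate).
  + by split.
  + by split.
  + split=> //; move=> _; exact: (key _ _ _ erefl).
Qed.

From mathcomp Require Import zify.

Fixpoint Inv (G : seq entry) (p : seq nat) : Prop :=
  match p with [::] => True | v :: q => ~~ goodrep G q v /\ Inv G q end.

Lemma goodrep_cat G q r x : goodrep G q x -> goodrep G (q ++ r) x.
Proof.
move=> /andP [h1 h2]; have hin : x \in q by rewrite -index_mem.
rewrite /goodrep index_cat hin size_cat take_cat h1 h2 andbT.
exact: leq_trans h1 (leq_addr _ _).
Qed.

Lemma Inv_cat_l G a c : Inv G (a ++ c) -> Inv G a.
Proof.
elim: a => //= v a IH [hg hI]; split; last exact: IH.
by apply/negP => h; move/negP: hg; apply; apply: goodrep_cat.
Qed.

Lemma Inv_cat_r G a c : Inv G (a ++ c) -> Inv G c.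
Proof. by elim: a => //= v a IH [_ hI]; apply: IH. Qed.

Lemma ex_min (h : nat -> nat) (p : seq nat) : p != [::] ->
  exists2 v, v \in p & forall w, w \in p -> h v <= h w.
Proof.
elim: p => // x p IH _; case: (eqVneq p [::]) => [->|hne].
  by exists x; rewrite ?mem_head // => w; rewrite inE => /eqP ->.
have [y hy hmin] := IH hne.
case: (leqP (h x) (h y)) => hxy.
- exists x; first exact: mem_head.
  move=> w; rewrite inE => /orP [/eqP ->//|/hmin]; exact: leq_trans hxy.
- exists y; first by rewrite inE hy orbT.
  move=> w; rewrite inE => /orP [/eqP ->|/hmin //]; exact: ltnW.
Qed.

Lemma split_index (v : nat) p : v \in p ->
  p = take (index v p) p ++ v :: drop (index v p).+1 p /\ v \notin take (index v p) p.
Proof.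
elim: p => // x p IH; rewrite inE /=; case: (eqVneq x v) => [->|hne] /= h.
  by rewrite ?eqxx /= ?drop0.
rewrite ?(negbTE hne) /=.
have [e1 e2] := IH h; split; first by rewrite {1}e1.
by rewrite inE negb_or e2 andbT eq_sym.
Qed.

Lemma bound G n : forall S p, size S = n -> uniq S -> Inv G p -> {subset p <= S} ->
  size p < 2 ^ n.
Proof.
elim: n => [|n IH] S p hs hu hI hsub.
  case: p hI hsub => [//|x p'] _ hsub.
  by have := hsub x (mem_head _ _); rewrite (size0nil hs).
case: (eqVneq p [::]) => [->|hne]; first by rewrite expn_gt0.
have [v hv hmin] := ex_min (fun w => (JG G w).1) hne.
have [hp hva] := split_index hv.
set a := take (index v p) p in hp hva; set b := drop (index v p).+1 p in hp.
have hI' := hI; rewrite hp in hI'.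
have hIa := Inv_cat_l hI'.
have [hgb hIb] := Inv_cat_r hI'.
have hvb : v \notin b.
  apply/negP => hvb; move/negP: hgb; apply.
  rewrite /goodrep index_mem hvb /=.
  apply/allP => w /mem_take hw; apply: hmin.
  by rewrite hp mem_cat in_cons hw !orbT.
have hvS : v \in S by apply: hsub.
have hsR : size (rem v S) = n by rewrite size_rem // hs.
have huR : uniq (rem v S) by apply: rem_uniq.
have hsubR : forall c : seq nat, v \notin c -> {subset c <= p} -> {subset c <= rem v S}.
  move=> c hvc hcp w hw; rewrite (mem_rem_uniq _ hu) inE; apply/andP; split.
  - by apply/eqP => e; move: hvc; rewrite -e hw.
  - by apply: hsub; apply: hcp.
have hap : {subset a <= p} by move=> w hw; rewrite hp mem_cat hw.
have hbp : {subset b <= p} by move=> w hw; rewrite hp mem_cat in_cons hw !orbT.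
have ha := IH _ a hsR huR hIa (hsubR a hva hap).
have hb := IH _ b hsR huR hIb (hsubR b hvb hbp).
rewrite hp size_cat /= expnS; lia.
Qed.

Lemma wsc_JG G (wf : forall w, wfe G (nth dflt G w)) v : wsc (JG G v).1 (JG G v).2.
Proof.
have := wf v; rewrite /JG; case: (nth dflt G v) => [n|j c|j c0 c1|j c] /=.
- by move=> _; constructor.
all: by case.
Qed.

Lemma build_ok G (wf : forall w, wfe G (nth dflt G w)) f p v :
  Inv G p -> {subset p <= iota 0 (size G)} -> 2 ^ size G <= f + size p ->
  valid true (build G f p v).
Proof.
elim: f p v => [|f IH] p v hI hS hf.
  rewrite /=; case E: (nth dflt G v) => [n|j0 c|j0 c0 c1|j0 c];
    [by split=> //; constructor| | |];
    (case hg: (goodrep G p v); [by rewrite /=; split=> //; apply: wsc_JG|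
       have := bound (size_iota 0 (size G)) (iota_uniq 0 (size G)) hI hS; lia]).
have hth := fun b => (thread_build wf f.+1 p v v).2 v (JG G v) b.
move: hth; rewrite /=.
have hw := wf v; have hwsc := wsc_JG wf v.
case E: (nth dflt G v) => [n|j0 c|j0 c0 c1|j0 c]; first by move=> _; split=> //; constructor.
-
  have hJ : JG G v = j0 by rewrite /JG E.
  rewrite E in hw.
  case hg: (goodrep G p v) => hth; [by rewrite /=; split=> //|].
  have hvG : v < size G by rewrite ltnNge; apply/negP => h; move: E; rewrite nth_default //; move=> ?; discriminate.
  have hI' : Inv G (v :: p) by split=> //; rewrite hg.
  have hS' : {subset v :: p <= iota 0 (size G)}
       by move=> w; rewrite in_cons => /orP [/eqP ->|/hS //]; rewrite mem_iota.
  have hf' : 2 ^ size G <= f + size (v :: p) by rewrite /= addnS.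
  have hopen : forall (w : nat) j', open_leaf v j' (build G f (v :: p) w) -> jeq j' (JG G v)
       by move=> w j' hl; have [-> _] := open_char hl; apply: jeq_refl.
  case: hw => hw0 [hw1 [hw2 hw3]].
  split=> //; split; last split; last split; last split.
  + rewrite /= concl_build; split; last by split=> //; apply: IH.
    by rewrite /= -hw2; apply: wsc_bisim (bisim_sym hw3) _; rewrite hJ in hwsc.
  + done.
  + by rewrite /= concl_build hJ; split=> //.
  + exact: hopen.
  + by move=> _; apply: hth.
-
  have hJ : JG G v = j0 by rewrite /JG E.
  rewrite E in hw.
  case hg: (goodrep G p v) => hth; [by rewrite /=; split=> //|].
  have hvG : v < size G by rewrite ltnNge; apply/negP => h; move: E; rewrite nth_default //; move=> ?; discriminate.
  have hI' : Inv G (v :: p) by split=> //; rewrite hg.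
  have hS' : {subset v :: p <= iota 0 (size G)}
       by move=> w; rewrite in_cons => /orP [/eqP ->|/hS //]; rewrite mem_iota.
  have hf' : 2 ^ size G <= f + size (v :: p) by rewrite /= addnS.
  have hopen : forall (w : nat) j', open_leaf v j' (build G f (v :: p) w) -> jeq j' (JG G v)
       by move=> w j' hl; have [-> _] := open_char hl; apply: jeq_refl.
  case: hw => hw0 [hw1 [hw2 hw3]].
  split=> //; split; last split; last split; last split.
  + rewrite /= !concl_build; split; last by split; [apply: IH|split; [apply: IH|rewrite hw1 hw2]].
    by rewrite /= hw1; apply: wsc_bisim (bisim_sym hw3) _; rewrite hJ in hwsc.
  + done.
  + by rewrite /= !concl_build hJ; split=> //.
  + by move=> j' [] hl; [apply: (hopen c0)|apply: (hopen c1)].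
  + by move=> _; apply: hth.
-
  have hJ : JG G v = j0 by rewrite /JG E.
  rewrite E in hw.
  case hg: (goodrep G p v) => hth; [by rewrite /=; split=> //|].
  have hvG : v < size G by rewrite ltnNge; apply/negP => h; move: E; rewrite nth_default //; move=> ?; discriminate.
  have hI' : Inv G (v :: p) by split=> //; rewrite hg.
  have hS' : {subset v :: p <= iota 0 (size G)}
       by move=> w; rewrite in_cons => /orP [/eqP ->|/hS //]; rewrite mem_iota.
  have hf' : 2 ^ size G <= f + size (v :: p) by rewrite /= addnS.
  have hopen : forall (w : nat) j', open_leaf v j' (build G f (v :: p) w) -> jeq j' (JG G v)
       by move=> w j' hl; have [-> _] := open_char hl; apply: jeq_refl.
  case: hw => hw0 [hw1 hw2].
  split=> //; split; last split; last split; last split.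
  + rewrite /= concl_build; split; last by apply: IH.
    by rewrite /= -hw1; apply: wsc_bisim (bisim_sym hw2) _; rewrite hJ in hwsc.
  + done.
  + by rewrite /= concl_build hJ; split=> //.
  + exact: hopen.
  + by move=> _; apply: hth.
Qed.

Lemma build_closed G f v u j : ~ open_leaf u j (build G f [::] v).
Proof. by move=> hl; have [_ [h _]] := open_char hl. Qed.

Theorem mainTheorem3 (M : term) :
  derivable_Reg_plus (0, M) <-> derivable_Reg_plus0 (0, M).
Proof.
split.
- move=> [d [hv [hc hj]]].
  set G := (gen d (fun _ => 0) 0).1.
  have hP : Placed G 0 G by move=> i hi; rewrite add0n.
  have [hr hwf] := gen_correct hv hP (fun u j h => False_ind _ (hc u j h)).
  have wf : forall w, wfe G (nth dflt G w).
    move=> w; case: (ltnP w (size G)) => hw; first exact: hwf.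
    by rewrite nth_default.
  set r := (gen d (fun _ => 0) 0).2 in hr.
  exists (build G (2 ^ size G) [::] r); split; last split.
  + by apply: build_ok => //; rewrite addn0.
  + by move=> u j; apply: build_closed.
  + by rewrite concl_build; apply: jeq_trans hr hj.
- move=> [d [hv [hc hj]]]; exists d; split=> //; exact: valid_weaken.
Qed.
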